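(* Let $P$ be a $6\times 6$ unitary pattern that has a row $r$ of weight $4$ and no row of weight $5$ or more. Then at least one of the following holds: (i) there is another row of $P$ of weight $4$ with the same support as $r$, and there is a row of $P$ of weight $2$ whose support is contained in the support of $r$; or (ii) $P$ has at least four rows (counting $r$) of weight at least $3$. In both cases, $P$ has at least four rows of weight at least $2$.
   Context: The pattern of a complex matrix is the $0/1$ matrix obtained by replacing each nonzero entry by $1$. A unitary pattern is a $0/1$ matrix that is the pattern of some unitary matrix. For a row of a $0/1$ matrix, its support is the set of column indices where it has a $1$, and its weight is the number of its ones. *)

(* Defs.v *)
From HB Require Import structures.
From mathcomp Require Import all_boot all_order all_algebra.
From mathcomp Require Import complex.
From mathcomp Require Import Rstruct.
From Stdlib Require Import Reals.
Set Implicit Arguments. Unset Strict Implicit. Unset Printing Implicit Defensive.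
Import Order.TTheory GRing.Theory Num.Theory.
Local Open Scope ring_scope.

Definition CC : numClosedFieldType := (Rdefinitions.R)[i].

Definition unitary_mx (n : nat) (U : 'M[CC]_n) : Prop :=
  U *m (map_mx Num.conj U)^T = 1%:M.

Definition pattern (m n : nat) (U : 'M[CC]_(m, n)) : 'M[bool]_(m, n) :=
  \matrix_(i, j) (U i j != 0).

Definition unitary_pattern (n : nat) (P : 'M[bool]_n) : Prop :=
  exists U : 'M[CC]_n, unitary_mx U /\ pattern U = P.

Definition row_support (m n : nat) (P : 'M[bool]_(m, n)) (i : 'I_m) : {set 'I_n} :=
  [set j | P i j].

Definition row_weight (m n : nat) (P : 'M[bool]_(m, n)) (i : 'I_m) : nat :=
  #|row_support P i|.

(* Main.v *)
Require Import Defs.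
From mathcomp Require Import all_boot all_order all_algebra.
From mathcomp Require Import zify.
Set Implicit Arguments. Unset Strict Implicit. Unset Printing Implicit Defensive.
Module LAm.
Import Order.TTheory GRing.Theory Num.Theory.

Section LA.
Variables (n : nat) (U : 'M[CC]_n).
Hypothesis HU : unitary_mx U.
Local Open Scope ring_scope.

Lemma rowsum (i j : 'I_n) : \sum_k U i k * (U j k)^* = (i == j)%:R.
Proof.
have := congr1 (fun M : 'M_n => M i j) (HU : _ = _); rewrite /= !mxE => <-.
by apply: eq_bigr => k _; rewrite !mxE.
Qed.

Lemma colsum (p q : 'I_n) : \sum_k (U k p)^* * U k q = (p == q)%:R.
Proof.
have := congr1 (fun M : 'M_n => M p q) (mulmx1C (HU : _ = _)); rewrite /= !mxE => <-.
by apply: eq_bigr => k _; rewrite !mxE.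
Qed.

Lemma patE i j : pattern U i j = (U i j != 0).
Proof. by rewrite /pattern mxE. Qed.

Lemma F1r (i j : 'I_n) : i != j ->
  #|row_support (pattern U) i :&: row_support (pattern U) j| != 1%N.
Proof.
move=> ij; apply/negP => /cards1P [c Hc].
have := rowsum i j; rewrite (negPf ij) (bigD1 c) //=.
have -> : \sum_(k < n | k != c) U i k * (U j k)^* = 0.
  apply: big1 => k kc.
  have : k \notin [set c] by rewrite inE.
  rewrite -Hc !inE !patE negb_and !negbK => /orP [] /eqP ->.
    by rewrite mul0r.
  by rewrite conjC0 mulr0.
rewrite addr0.
have : c \in [set c] by rewrite inE.
rewrite -Hc !inE !patE => /andP [h1 h2] H.
have : U i c * (U j c)^* != 0 by rewrite mulf_neq0 // conjC_eq0.
by rewrite H mulr0n eqxx.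
Qed.

Lemma F1c (p q : 'I_n) : p != q ->
  #|[set i | pattern U i p && pattern U i q]| != 1%N.
Proof.
move=> pq; apply/negP => /cards1P [c Hc].
have := colsum p q; rewrite (negPf pq) (bigD1 c) //=.
have -> : \sum_(k < n | k != c) (U k p)^* * U k q = 0.
  apply: big1 => k kc.
  have : k \notin [set c] by rewrite inE.
  rewrite -Hc !inE !patE negb_and !negbK => /orP [] /eqP ->.
    by rewrite conjC0 mul0r.
  by rewrite mulr0.
rewrite addr0.
have : c \in [set c] by rewrite inE.
rewrite -Hc !inE !patE => /andP [h1 h2] H.
have : (U c p)^* * U c q != 0 by rewrite mulf_neq0 // conjC_eq0.
by rewrite H mulr0n eqxx.
Qed.

Lemma Nrows (I J : {set 'I_n}) :
  (forall i, i \in I -> row_support (pattern U) i \subset J) -> (#|I| <= #|J|)%N.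
Proof.
move=> HIJ; rewrite -(ler_nat CC).
have e1 : (#|I|%:R : CC) = \sum_(i in I) \sum_(k in J) U i k * (U i k)^*.
  rewrite -sum1_card natr_sum; apply: eq_bigr => i iI.
  transitivity (\sum_k U i k * (U i k)^*); first by rewrite rowsum eqxx.
  rewrite (bigID (mem J)) /=.
  have -> : \sum_(k < n | k \notin J) U i k * (U i k)^* = 0; last by rewrite addr0.
  apply: big1 => k kJ; have : k \notin row_support (pattern U) i.
    by apply: contra kJ; apply: subsetP; apply: HIJ.
  by rewrite inE patE negbK => /eqP ->; rewrite mul0r.
have e2 : (#|J|%:R : CC) = \sum_(k in J) \sum_i U i k * (U i k)^*.
  rewrite -sum1_card natr_sum; apply: eq_bigr => k kJ.
  transitivity (\sum_i (U i k)^* * U i k); first by rewrite colsum eqxx.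
  by apply: eq_bigr => i _; rewrite mulrC.
rewrite e1 e2 exchange_big /=; apply: ler_sum => k kJ.
rewrite (@big_mkcond CC) /=; apply: ler_sum => i _.
by case: (i \in I) => //; apply: mul_conjC_ge0.
Qed.
End LA.
End LAm.
Import LAm.

Lemma other_in (T : finType) (X : {set T}) x : x \in X -> #|X| != 1 ->
  exists y, y \in X /\ y != x.
Proof.
move=> xX n1; case: (boolP [exists y, (y \in X) && (y != x)]).
  by move=> /existsP [y /andP [h1 h2]]; exists y.
rewrite negb_exists => /forallP H; exfalso; move/negP: n1; apply.
apply/cards1P; exists x; apply/setP => y; rewrite inE.
have := H y; rewrite negb_and negbK.
case: (boolP (y \in X)) => yX /=.
  by move=> /eqP ->; rewrite eqxx.
by move=> _; apply/esym/negbTE; apply: contra yX => /eqP ->.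
Qed.

Lemma two_sub (T : finType) (X Y : {set T}) a : #|Y| = 2 -> a \in X -> a \in Y ->
  #|X :&: Y| != 1 -> Y \subset X.
Proof.
move=> cY aX aY n1.
have le : #|X :&: Y| <= #|Y| by apply: subset_leq_card; apply: subsetIr.
have gt : 0 < #|X :&: Y| by apply/card_gt0P; exists a; rewrite inE aX aY.
have e : X :&: Y == Y by rewrite eqEcard subsetIr; lia.
by rewrite -(eqP e) subsetIl.
Qed.

Section Comb.
Variables (P : 'M[bool]_6) (r : 'I_6).
Local Notation A := (row_support P).
Local Notation w := (row_weight P).
Hypothesis F1r : forall i j, i != j -> #|A i :&: A j| != 1.
Hypothesis F1c : forall p q : 'I_6, p != q -> #|[set i | P i p && P i q]| != 1.
Hypothesis N : forall I J : {set 'I_6},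
  (forall i, i \in I -> A i \subset J) -> #|I| <= #|J|.
Hypothesis wr : w r = 4.
Hypothesis wle : forall i, w i <= 4.

Lemma memA i j : (j \in A i) = P i j.
Proof. by rewrite inE. Qed.

Lemma key i : w i <= 2 -> ~~ ((w i == 2) && (A i \subset A r)) -> A i \subset ~: A r.
Proof.
move=> wi H.
have ir : i != r by apply/eqP => e; move: wi; rewrite e wr.
have n1 := F1r ir.
case: (boolP (A i :&: A r == set0)).
  by rewrite setI_eq0 disjoints_subset.
move=> /set0Pn [a aI]; exfalso; move/negP: H; apply.
have le : #|A i :&: A r| <= #|A i| by apply: subset_leq_card; apply: subsetIl.
have gt : 0 < #|A i :&: A r| by apply/card_gt0P; exists a.
have wd : w i = #|A i| by [].
have e : A i :&: A r == A i by rewrite eqEcard subsetIl; lia.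
apply/andP; split; first by apply/eqP; lia.
by rewrite -(eqP e) subsetIr.
Qed.

Lemma part2 : 4 <= #|[set i | 2 <= w i]|.
Proof.
have h1 := cardsC [set i | 2 <= w i].
have e : ~: [set i | 2 <= w i] = [set i | w i < 2].
  by apply/setP => i; rewrite !inE -ltnNge.
rewrite e card_ord in h1.
have h2 : #|[set i | w i < 2]| <= #|~: A r|.
  apply: N => i; rewrite inE => wi; apply: key; first by lia.
  by apply/negP => /andP [/eqP h _]; lia.
have h3 := cardsC (A r); rewrite card_ord in h3.
have : #|A r| = 4 by [].
lia.
Qed.

Lemma part1 : (exists r' : 'I_6, [/\ r' != r, w r' = 4 & A r' = A r] /\
    exists s : 'I_6, w s = 2 /\ A s \subset A r)
   \/ 4 <= #|[set i : 'I_6 | 3 <= w i]|.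
Proof.
set H := [set i : 'I_6 | 3 <= w i].
case: (leqP 4 #|H|) => [h|hH]; [by right | left].
have cH := cardsC H; rewrite card_ord in cH.
have eL : ~: H = [set i | w i <= 2] by apply/setP => i; rewrite !inE -ltnNge.
have wrA : #|A r| = 4 by [].
have h3 := cardsC (A r); rewrite card_ord in h3.
have [s /andP [/eqP ws sS]] : exists s, (w s == 2) && (A s \subset A r).
  case: (boolP [exists s, (w s == 2) && (A s \subset A r)]).
    by move=> /existsP.
  rewrite negb_exists => /forallP Hn; exfalso.
  have : #|~: H| <= #|~: A r|.
    by apply: N => i; rewrite eL inE => wi; exact: key wi (Hn i).
  move: cH hH h3 wrA; clear; lia.
have wsA : #|A s| = 2 by [].
have cD : #|A r :\: A s| = 2 by rewrite cardsD (setIidPr sS) wsA wrA.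
move/eqP/cards2P: cD => [c [d [cd eCD]]].
have : 0 < #|A s| by rewrite wsA.
move/card_gt0P => [a aS].
have : c \in A r :\: A s by rewrite eCD !inE eqxx.
rewrite inE => /andP [cnS cR].
have : d \in A r :\: A s by rewrite eCD !inE eqxx orbT.
rewrite inE => /andP [dnS dR].
have aR : a \in A r := subsetP sS a aS.
have ac : a != c by apply: contraNneq cnS => <-.
have ad : a != d by apply: contraNneq dnS => <-.
have [y [yin yr]] := other_in (x := r) (X := [set i | P i a && P i c])
   ltac:(by rewrite inE -!memA aR cR) (F1c ac).
move: yin; rewrite inE => /andP [ya yc].
have ys : y != s by apply/eqP => e; move: cnS; rewrite -e memA yc.
have sy : A s \subset A y := two_sub wsA (ltac:(by rewrite memA) : a \in A y) aS (F1r ys).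
have wy : 3 <= w y.
  have e3 : #|c |: A s| = 3 by rewrite cardsU1 cnS wsA.
  apply: leq_trans (_ : 3 <= #|c |: A s|) _; first by rewrite e3.
  apply: subset_leq_card; apply/subsetP => x; rewrite in_setU1.
  by case/orP => [/eqP -> | xs]; [rewrite memA | exact: (subsetP sy)].
have [z [zin zr]] := other_in (x := r) (X := [set i | P i a && P i d])
   ltac:(by rewrite inE -!memA aR dR) (F1c ad).
move: zin; rewrite inE => /andP [za zd].
have zs : z != s by apply/eqP => e; move: dnS; rewrite -e memA zd.
have sz : A s \subset A z := two_sub wsA (ltac:(by rewrite memA) : a \in A z) aS (F1r zs).
have wz : 3 <= w z.
  have e3 : #|d |: A s| = 3 by rewrite cardsU1 dnS wsA.
  apply: leq_trans (_ : 3 <= #|d |: A s|) _; first by rewrite e3.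
  apply: subset_leq_card; apply/subsetP => x; rewrite in_setU1.
  by case/orP => [/eqP -> | xs]; [rewrite memA | exact: (subsetP sz)].
have full : forall t, A s \subset A t -> P t c -> P t d -> t != r ->
    exists r', [/\ r' != r, w r' = 4 & A r' = A r].
  move=> t st tc td tr.
  have Sy : A r \subset A t.
    apply/subsetP => x xR; case: (boolP (x \in A s)) => [xs | xns].
      exact: (subsetP st).
    have : x \in A r :\: A s by rewrite inE xns xR.
    by rewrite eCD !inE => /orP [] /eqP ->.
  have := wle t; have := subset_leq_card Sy.
  rewrite /row_weight => h1 h2.
  exists t; split => //; first by apply/eqP; rewrite eqn_leq h2 /=; move: h1; rewrite wrA.
  by apply/esym/eqP; rewrite eqEcard Sy wrA h2.
case: (boolP (P y d)) => [yd | ydn].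
  have [t [t1 t2 t3]] := full y sy yc yd yr.
  by exists t; split; [split | exists s].
case: (boolP (P z c)) => [zc | zcn].
  have [t [t1 t2 t3]] := full z sz zc zd zr.
  by exists t; split; [split | exists s].
exfalso.
have [u [uin ur]] := other_in (x := r) (X := [set i | P i c && P i d])
   ltac:(by rewrite inE -!memA cR dR) (F1c cd).
move: uin; rewrite inE => /andP [uc ud].
have uy : u != y by apply/eqP => e; move: ydn; rewrite -e ud.
have uz : u != z by apply/eqP => e; move: zcn; rewrite -e uc.
have yz : y != z by apply/eqP => e; move: zcn; rewrite -e yc.
case: (leqP 3 (w u)) => hw.
  have : #|r |: (y |: (z |: [set u]))| <= #|H|.
    apply: subset_leq_card; apply/subsetP => x; rewrite /H !inE.
    by case/or4P => /eqP ->; rewrite ?wr.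
  rewrite !cardsU1 cards1 !inE.
  rewrite ![r == _]eq_sym ![y == u]eq_sym ![z == u]eq_sym.
  rewrite (negPf yr) (negPf zr) (negPf ur) (negPf yz) (negPf uy) (negPf uz) /=.
  by move=> h; move: (leq_ltn_trans h hH); rewrite ltnn.
have eW : A u = [set c; d].
  apply/esym/eqP; rewrite eqEcard cards2 cd.
  have : w u <= 2 by rewrite -ltnS.
  rewrite /row_weight => ->; rewrite andbT.
  by apply/subsetP => x; rewrite !inE => /orP [] /eqP ->.
have : #|A y :&: A u| == 1.
  apply/cards1P; exists c; apply/setP => x; rewrite eW !inE.
  case: (eqVneq x c) => [-> | xc] /=; first by rewrite yc.
  case: (eqVneq x d) => [-> | xd] /=; last by rewrite andbF.
  by rewrite (negPf ydn).
have := F1r (i := y) (j := u) ltac:(by rewrite eq_sym). by move=> /negPf ->.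
Qed.

End Comb.

Theorem mainTheorem5 (P : 'M[bool]_6) (r : 'I_6) :
  unitary_pattern P ->
  row_weight P r = 4 ->
  (forall i : 'I_6, row_weight P i <= 4) ->
  ((exists r' : 'I_6, [/\ r' != r, row_weight P r' = 4 &
                          row_support P r' = row_support P r] /\
    exists s : 'I_6, row_weight P s = 2 /\ row_support P s \subset row_support P r)
   \/ 4 <= #|[set i : 'I_6 | 3 <= row_weight P i]|)
  /\ 4 <= #|[set i : 'I_6 | 2 <= row_weight P i]|.
Proof.
move=> [U [HU HP]] wr wle; subst P.
split.
  exact: (part1 (F1r HU) (F1c HU) (Nrows HU) wr wle).
exact: (part2 (F1r HU) (Nrows HU) wr).
Qed.
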